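(* Let $g(\mu)=\mu^2$, let $T,C_1>0$, set $\mu^\ast:=\sqrt{C_1/T}$ (viewed as a constant function on $[0,T]$) and $\tau^\ast:=\sqrt{C_1T}$, and let $\Phi_h^\ast:=\nabla\Phi(\hat z(\tau^\ast))\cdot h(\hat z(\tau^\ast),p)$. If $\Phi_h^\ast>0$, then there exists $\delta>0$ such that $\Phi(z_\mu(T))\le\Phi(z_{\mu^\ast}(T))$ for every $\mu\in C([0,T],(0,\infty))$ with $\int_0^T\mu(t)^2\,\mathrm{d}t=C_1$ and $\sup_{t\in[0,T]}|\mu(t)-\mu^\ast|<\delta$, i.e. $\mu^\ast$ is a local maximizer of $\mu\mapsto\Phi(z_\mu(T))$ on this constraint set. If $\Phi_h^\ast<0$, the same holds with $\ge$ in place of $\le$ (local minimizer).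
   Context: Standing setup: $n,s\ge1$, $p\in\mathbb{R}^s$, $z_0\in\mathbb{R}^n$; $h:\mathbb{R}^n\times\mathbb{R}^s\to\mathbb{R}^n$ is continuously differentiable in its first argument and such that the autonomous initial value problem $\hat z'(\tau)=h(\hat z(\tau),p)$, $\hat z(0)=z_0$ has a unique solution $\hat z$ defined for all $\tau\in\mathbb{R}$. For $T>0$ and $\mu\in C([0,T],\mathbb{R})$, $z_\mu:[0,T]\to\mathbb{R}^n$ denotes the solution of $\dot z(t)=\mu(t)h(z(t),p)$, $z(0)=z_0$. $\Phi:\mathbb{R}^n\to\mathbb{R}$ is continuously differentiable. *)

(* Defs.v *)
From Stdlib Require Import Reals Lra Arith.
Open Scope R_scope.

Definition Idx (n : nat) := {i : nat | (i < n)%nat}.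
Definition Vec (n : nat) := Idx n -> R.

Definition vget {n : nat} (v : Vec n) (i : nat) : R :=
  match lt_dec i n with
  | left H => v (exist _ i H)
  | right _ => 0
  end.

Fixpoint sumn (f : nat -> R) (k : nat) : R :=
  match k with O => 0 | S k' => sumn f k' + f k' end.

Definition vsum {n : nat} (v : Vec n) : R := sumn (vget v) n.
Definition vdot {n : nat} (u v : Vec n) : R := vsum (fun i => u i * v i).
(* l^1 norm (all norms on R^n are equivalent) *)
Definition vnorm {n : nat} (v : Vec n) : R := vsum (fun i => Rabs (v i)).
Definition vsub {n : nat} (u v : Vec n) : Vec n := fun i => u i - v i.

Definition vcont {n : nat} (f : Vec n -> R) : Prop :=
  forall x eps, eps > 0 -> exists d, d > 0 /\
    forall y, vnorm (vsub y x) < d -> Rabs (f y - f x) < eps.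

Definition vshift {n : nat} (x : Vec n) (j : Idx n) (t : R) : Vec n :=
  fun k => if Nat.eq_dec (proj1_sig k) (proj1_sig j) then x k + t else x k.

Definition has_partial {n : nat} (f : Vec n -> R) (x : Vec n) (j : Idx n) (l : R) : Prop :=
  derivable_pt_lim (fun t => f (vshift x j t)) 0 l.

Definition C1_with_grad {n : nat} (Phi : Vec n -> R) (grad : Vec n -> Vec n) : Prop :=
  (forall x j, has_partial Phi x j (grad x j)) /\
  (forall j, vcont (fun x => grad x j)).

Definition C1_first_arg {n s : nat} (h : Vec n -> Vec s -> Vec n) : Prop :=
  exists Dh : Vec n -> Vec s -> Idx n -> Idx n -> R,
    forall q : Vec s,
      (forall x i j, has_partial (fun y => h y q i) x j (Dh x q i j)) /\
      (forall i j, vcont (fun x => Dh x q i j)).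

Definition is_global_sol {n s : nat} (h : Vec n -> Vec s -> Vec n) (p : Vec s)
  (z0 : Vec n) (w : R -> Vec n) : Prop :=
  w 0 = z0 /\
  forall t i, derivable_pt_lim (fun u => w u i) t (h (w t) p i).

(* z solves z'(t) = mu(t) h(z(t),p), z(0) = z0 on [0,T]
   (one-sided derivatives at the endpoints) *)
Definition is_sol_on {n s : nat} (h : Vec n -> Vec s -> Vec n) (p : Vec s)
  (z0 : Vec n) (T : R) (mu : R -> R) (z : R -> Vec n) : Prop :=
  z 0 = z0 /\
  forall t, 0 <= t <= T -> forall (i : Idx n) eps, eps > 0 ->
    exists d, d > 0 /\ forall u, 0 <= u <= T -> u <> t -> Rabs (u - t) < d ->
      Rabs ((z u i - z t i) / (u - t) - mu t * h (z t) p i) < eps.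

Definition cont_pos_on (T : R) (mu : R -> R) : Prop :=
  (forall t, 0 <= t <= T -> mu t > 0) /\
  (forall t, 0 <= t <= T -> forall eps, eps > 0 -> exists d, d > 0 /\
     forall u, 0 <= u <= T -> Rabs (u - t) < d -> Rabs (mu u - mu t) < eps).

Definition energy_eq (T C1 : R) (mu : R -> R) : Prop :=
  exists pr : Riemann_integrable (fun t => mu t ^ 2) 0 T, RiemannInt pr = C1.

Definition sup_dist_lt (T : R) (mu : R -> R) (c delta : R) : Prop :=
  exists M, M < delta /\ forall t, 0 <= t <= T -> Rabs (mu t - c) <= M.

(* Main.v *)
Require Import Defs.
From Stdlib Require Import Reals Lra Lia Arith FunctionalExtensionality Classical.
From Coquelicot Require Import Coquelicot.
Open Scope R_scope.

Lemma Idx_eq {n} (i j : Idx n) : proj1_sig i = proj1_sig j -> i = j.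
Proof.
  destruct i as [i Hi], j as [j Hj]; simpl; intros ->.
  f_equal; apply Peano_dec.le_unique.
Qed.

Lemma vget_idx {n} (v : Vec n) (j : Idx n) : vget v (proj1_sig j) = v j.
Proof.
  unfold vget; destruct (lt_dec (proj1_sig j) n) as [H|H].
  - f_equal; apply Idx_eq; reflexivity.
  - exfalso; apply H; exact (proj2_sig j).
Qed.

Lemma sumn_ext f g K : (forall k, (k < K)%nat -> f k = g k) -> sumn f K = sumn g K.
Proof. induction K; simpl; intros; auto. rewrite IHK by auto. rewrite H by lia. auto. Qed.

Lemma sumn_plus f g K : sumn (fun k => f k + g k) K = sumn f K + sumn g K.
Proof. induction K; simpl; [ring| rewrite IHK; ring]. Qed.

Lemma sumn_scal c f K : sumn (fun k => c * f k) K = c * sumn f K.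
Proof. induction K; simpl; [ring| rewrite IHK; ring]. Qed.

Lemma sumn_le f g K : (forall k, (k < K)%nat -> f k <= g k) -> sumn f K <= sumn g K.
Proof. induction K; simpl; intros; [lra|]. assert (f K <= g K) by (apply H; lia).
  assert (sumn f K <= sumn g K) by (apply IHK; intros; apply H; lia). lra. Qed.

Lemma sumn_abs f K : Rabs (sumn f K) <= sumn (fun k => Rabs (f k)) K.
Proof. induction K; simpl. rewrite Rabs_R0; lra.
  eapply Rle_trans; [apply Rabs_triang|]. lra. Qed.

Lemma sumn_const c K : sumn (fun _ => c) K = INR K * c.
Proof. induction K; [simpl; ring|]. rewrite S_INR; cbn [sumn]; rewrite IHK; ring. Qed.

Lemma sumn_tele (a : nat -> R) K : sumn (fun k => a (S k) - a k) K = a K - a O.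
Proof. induction K; simpl; [ring| rewrite IHK; ring]. Qed.

Lemma sumn_nonneg f K : (forall k, (k < K)%nat -> 0 <= f k) -> 0 <= sumn f K.
Proof. intros. rewrite <- (Rmult_0_r (INR K)), <- sumn_const. apply sumn_le; auto. Qed.

Lemma sumn_ge_term f K k : (forall k, (k < K)%nat -> 0 <= f k) -> (k < K)%nat -> f k <= sumn f K.
Proof. induction K; intros; [lia|]. simpl.
  destruct (Nat.eq_dec k K) as [->|Hne].
  - assert (0 <= sumn f K) by (apply sumn_nonneg; intros; apply H; lia). lra.
  - assert (f k <= sumn f K) by (apply IHK; [intros; apply H|]; lia).
    assert (0 <= f K) by (apply H; lia). lra.
Qed.

Lemma sumn_cs f K : (sumn f K)^2 <= INR K * sumn (fun k => f k * f k) K.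
Proof. induction K. simpl; lra.
  rewrite S_INR; cbn [sumn]. set (S := sumn f K) in *. set (Q := sumn (fun k => f k * f k) K) in *.
  assert (0 <= Q) by (apply sumn_nonneg; intros; nra).
  assert (0 <= INR K) by apply pos_INR.
  assert (2 * S * f K <= Q + INR K * (f K * f K)).
  { destruct (Req_dec (INR K) 0) as [Hk|Hk].
    - rewrite Hk in IHK. assert (S = 0) by nra. rewrite H1, Hk; nra.
    - assert (0 < INR K) by lra.
      assert (0 <= (INR K * f K - S)^2) by apply pow2_ge_0.
      apply (Rmult_le_reg_l (INR K)); auto. nra. }
  nra.
Qed.

Section V.
Context {n : nat}.

Lemma vsum_le (u v : Vec n) : (forall i, u i <= v i) -> vsum u <= vsum v.
Proof. intros; unfold vsum; apply sumn_le; intros; unfold vget; destruct lt_dec; auto; lra. Qed.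

Lemma vsum_plus (u v : Vec n) : vsum (fun i => u i + v i) = vsum u + vsum v.
Proof. unfold vsum; rewrite <- sumn_plus; apply sumn_ext; intros; unfold vget; destruct lt_dec; auto; ring. Qed.

Lemma vsum_scal c (u : Vec n) : vsum (fun i => c * u i) = c * vsum u.
Proof. unfold vsum; rewrite <- sumn_scal; apply sumn_ext; intros; unfold vget; destruct lt_dec; auto; ring. Qed.

Lemma vsum_ext (u v : Vec n) : (forall i, u i = v i) -> vsum u = vsum v.
Proof. intros; unfold vsum; apply sumn_ext; intros; unfold vget; destruct lt_dec; auto. Qed.

Lemma vsum_abs (u : Vec n) : Rabs (vsum u) <= vsum (fun i => Rabs (u i)).
Proof. unfold vsum; eapply Rle_trans; [apply sumn_abs|]; apply sumn_le; intros; unfold vget; destruct lt_dec; auto; try lra. rewrite Rabs_R0; lra. Qed.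

Lemma vsum_const_le (u : Vec n) M : (forall i, u i <= M) -> vsum u <= INR n * M.
Proof. intros; unfold vsum; rewrite <- sumn_const; apply sumn_le; intros; unfold vget; destruct lt_dec; auto; lia. Qed.

Lemma vsum_nonneg (u : Vec n) : (forall i, 0 <= u i) -> 0 <= vsum u.
Proof. intros; unfold vsum; apply sumn_nonneg; intros; unfold vget; destruct lt_dec; auto; lra. Qed.

Lemma vsum_ge_term (u : Vec n) j : (forall i, 0 <= u i) -> u j <= vsum u.
Proof. intros. rewrite <- vget_idx. unfold vsum; apply sumn_ge_term; [|exact (proj2_sig j)].
  intros; unfold vget; destruct lt_dec; auto; lra. Qed.

Lemma vnorm_nonneg (v : Vec n) : 0 <= vnorm v.
Proof. apply vsum_nonneg; intros; apply Rabs_pos. Qed.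

Lemma vabs_le_vnorm (v : Vec n) j : Rabs (v j) <= vnorm v.
Proof. apply (vsum_ge_term (fun i => Rabs (v i))); intros; apply Rabs_pos. Qed.

Lemma vnorm_tri (x y z : Vec n) : vnorm (vsub x z) <= vnorm (vsub x y) + vnorm (vsub y z).
Proof. unfold vnorm; rewrite <- vsum_plus; apply vsum_le; intros; unfold vsub.
  replace (x i - z i) with ((x i - y i) + (y i - z i)) by ring; apply Rabs_triang. Qed.

Lemma vnorm_sym (x y : Vec n) : vnorm (vsub x y) = vnorm (vsub y x).
Proof. apply vsum_ext; intros; unfold vsub; apply Rabs_minus_sym. Qed.

Lemma vnorm_self (x : Vec n) : vnorm (vsub x x) = 0.
Proof. unfold vnorm; rewrite <- (Rmult_0_l (vsum (fun _ : Idx n => 0))) at 1.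
  rewrite <- vsum_scal. apply vsum_ext; intros; unfold vsub; rewrite Rminus_diag, Rabs_R0; ring. Qed.

Lemma vnorm_zero_eq (x y : Vec n) : vnorm (vsub x y) <= 0 -> x = y.
Proof. intros. apply functional_extensionality; intros i.
  pose proof (vabs_le_vnorm (vsub x y) i). change (vsub x y i) with (x i - y i) in H0.
  pose proof (Rabs_pos (x i - y i)). assert (Rabs (x i - y i) = 0) by lra.
  destruct (Req_dec (x i - y i) 0); [lra|]. apply Rabs_no_R0 in H3; lra. Qed.

Lemma vdot_bound (c d : Vec n) : Rabs (vdot c d) <= vnorm c * vnorm d.
Proof. unfold vdot. eapply Rle_trans; [apply vsum_abs|].
  unfold vnorm at 2. rewrite <- vsum_scal. apply vsum_le; intros.
  rewrite Rabs_mult. apply Rmult_le_compat_r; [apply Rabs_pos| apply vabs_le_vnorm]. Qed.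

Lemma vnorm_cs (e : Vec n) : (vnorm e)^2 <= INR n * vsum (fun i => e i * e i).
Proof. unfold vnorm, vsum. eapply Rle_trans; [apply sumn_cs|].
  apply Rmult_le_compat_l; [apply pos_INR|]. apply Req_le, sumn_ext; intros.
  unfold vget; destruct lt_dec; try lia. rewrite <- Rabs_mult, Rabs_pos_eq; auto.
  apply Rle_0_sqr.
Qed.

Lemma fin_min (P : Idx n -> R -> Prop) :
  (forall i d d', P i d -> 0 < d' <= d -> P i d') ->
  (forall i, exists d, d > 0 /\ P i d) -> exists d, d > 0 /\ forall i, P i d.
Proof.
  intros Hm Hex.
  assert (forall K, exists d, d > 0 /\ forall i, (proj1_sig i < K)%nat -> P i d).
  { induction K.
    - exists 1; split; [lra|]; intros; lia.
    - destruct IHK as [d [Hd HK]].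
      destruct (lt_dec K n) as [HKn|HKn].
      + destruct (Hex (exist _ K HKn)) as [d' [Hd' HP]].
        exists (Rmin d d'); split; [apply Rmin_glb_lt; lra|].
        intros i Hi. destruct (Nat.eq_dec (proj1_sig i) K) as [He|He].
        * assert (i = exist _ K HKn) by (apply Idx_eq; auto). rewrite H.
          eapply Hm; [exact HP|]. split; [apply Rmin_glb_lt; lra| apply Rmin_r].
        * eapply Hm; [apply HK; lia|]. split; [apply Rmin_glb_lt; lra| apply Rmin_l].
      + exists d; split; auto; intros i Hi. apply HK. pose proof (proj2_sig i); simpl in *; lia. }
  destruct (H n) as [d [Hd HP]]. exists d; split; auto. intros; apply HP, (proj2_sig i).
Qed.

End V.

Section M.
Context {n : nat}.

Definition mix (x y : Vec n) (k : nat) : Vec n :=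
  fun i => if lt_dec (proj1_sig i) k then y i else x i.

Lemma mix_0 x y : mix x y 0 = x.
Proof. apply functional_extensionality; intros; unfold mix; destruct lt_dec; auto; lia. Qed.

Lemma mix_n x y : mix x y n = y.
Proof. apply functional_extensionality; intros i; unfold mix; destruct lt_dec; auto.
  exfalso; apply n0, (proj2_sig i). Qed.

Lemma mix_step x y j : mix x y (S (proj1_sig j)) = vshift (mix x y (proj1_sig j)) j (y j - x j).
Proof. apply functional_extensionality; intros i; unfold mix, vshift.
  destruct (Nat.eq_dec (proj1_sig i) (proj1_sig j)) as [e|e].
  - assert (i = j) by (apply Idx_eq; auto). subst i.
    destruct lt_dec; try lia. destruct lt_dec; try lia. ring.
  - destruct lt_dec; destruct lt_dec; auto; lia.
Qed.

Lemma vshift_0 (x : Vec n) j : vshift x j 0 = x.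
Proof. apply functional_extensionality; intros i; unfold vshift; destruct Nat.eq_dec; ring. Qed.

Lemma vshift_comp (x : Vec n) j t u : vshift (vshift x j t) j u = vshift x j (t + u).
Proof. apply functional_extensionality; intros i; unfold vshift; destruct Nat.eq_dec; ring. Qed.

End M.

Lemma deriv_shift (F : R -> R) t l : derivable_pt_lim (fun u => F (t + u)) 0 l -> derivable_pt_lim F t l.
Proof. unfold derivable_pt_lim; intros H eps He. destruct (H eps He) as [d Hd].
  exists d; intros h Hh Hhd. specialize (Hd h Hh Hhd). rewrite Rplus_0_l, Rplus_0_r in Hd. exact Hd. Qed.

Section M2.
Context {n : nat} (f : Vec n -> R) (g : Vec n -> Vec n)
  (Hp : forall x j, has_partial f x j (g x j)).

Lemma partial_line x j t : derivable_pt_lim (fun t => f (vshift x j t)) t (g (vshift x j t) j).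
Proof. apply deriv_shift. pose proof (Hp (vshift x j t) j) as H. unfold has_partial in H.
  eapply derivable_pt_lim_ext; [|exact H]. intros u; simpl. rewrite vshift_comp; auto. Qed.

Lemma seg x j d c eps :
  (forall th, (0 <= th <= d \/ d <= th <= 0) -> Rabs (g (vshift x j th) j - c) <= eps) ->
  Rabs (f (vshift x j d) - f x - c * d) <= eps * Rabs d.
Proof.
  intros H.
  assert (Hd0 := H 0). rewrite vshift_0 in Hd0.
  assert (0 <= eps) by (eapply Rle_trans; [apply Rabs_pos| apply Hd0; lra]).
  destruct (Rtotal_order d 0) as [Hd|[Hd|Hd]].
  - destruct (MVT_cor2 (fun t => f (vshift x j t)) (fun t => g (vshift x j t) j) d 0 Hd)
      as [c0 [He Hc]]. { intros; apply partial_line. }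
    rewrite vshift_0 in He.
    replace (f (vshift x j d)) with (f x - g (vshift x j c0) j * (0 - d)) by lra.
    replace (f x - g (vshift x j c0) j * (0 - d) - f x - c * d) with ((g (vshift x j c0) j - c) * d) by ring.
    rewrite Rabs_mult.
    apply Rmult_le_compat_r; [apply Rabs_pos|]. apply H; lra.
  - subst. rewrite vshift_0, Rabs_R0. replace (f x - f x - c * 0) with 0 by ring. rewrite Rabs_R0; lra.
  - destruct (MVT_cor2 (fun t => f (vshift x j t)) (fun t => g (vshift x j t) j) 0 d Hd)
      as [c0 [He Hc]]. { intros; apply partial_line. }
    rewrite vshift_0 in He.
    replace (f (vshift x j d)) with (f x + g (vshift x j c0) j * (d - 0)) by lra.
    replace (f x + g (vshift x j c0) j * (d - 0) - f x - c * d) with ((g (vshift x j c0) j - c) * d) by ring.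
    rewrite Rabs_mult.
    apply Rmult_le_compat_r; [apply Rabs_pos|]. apply H; lra.
Qed.

Lemma abs_between a b th x0 : (0 <= th <= b - a \/ b - a <= th <= 0) ->
  Rabs (a + th - x0) <= Rabs (a - x0) + Rabs (b - x0).
Proof. intros. unfold Rabs; repeat destruct Rcase_abs; lra. Qed.

Lemma mvt_vec x0 x y c eps :
  (forall xi, vnorm (vsub xi x0) <= vnorm (vsub x x0) + vnorm (vsub y x0) ->
     forall j, Rabs (g xi j - c j) <= eps) ->
  Rabs (f y - f x - vdot c (vsub y x)) <= eps * vnorm (vsub y x).
Proof.
  intros H.
  assert (E1 : f y - f x = sumn (fun k => f (mix x y (S k)) - f (mix x y k)) n).
  { rewrite (sumn_tele (fun k => f (mix x y k))), mix_0, mix_n; auto. }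
  rewrite E1. unfold vdot, vnorm, vsum. rewrite <- sumn_scal.
  assert (E2 : forall A B : R, A - B = A + (-1) * B) by (intros; ring).
  rewrite E2, <- sumn_scal, <- sumn_plus.
  eapply Rle_trans; [apply sumn_abs|]. apply sumn_le. intros k Hk.
  unfold vget. destruct lt_dec as [Hl|Hl]; [|lia].
  set (j := exist (fun i => (i < n)%nat) k Hl).
  change k with (proj1_sig j). rewrite mix_step.
  replace (f (vshift (mix x y (proj1_sig j)) j (y j - x j)) - f (mix x y (proj1_sig j)) +
     -1 * (c j * vsub y x j)) with
    (f (vshift (mix x y (proj1_sig j)) j (y j - x j)) - f (mix x y (proj1_sig j)) - c j * (y j - x j))
    by (unfold vsub; ring).
  apply seg. intros th Hth. apply H.
  unfold vnorm; rewrite <- vsum_plus. apply vsum_le. intros i.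
  unfold vsub, vshift, mix.
  destruct (Nat.eq_dec (proj1_sig i) (proj1_sig j)) as [e|e].
  - assert (i = j) by (apply Idx_eq; auto). subst i.
    destruct lt_dec; [lia|]. apply abs_between; auto.
  - destruct lt_dec.
    + pose proof (Rabs_pos (x i - x0 i)); lra.
    + pose proof (Rabs_pos (y i - x0 i)); lra.
Qed.

End M2.

Section M3.
Context {n : nat}.

Lemma grad_near (g : Vec n -> Vec n) (Hc : forall j, vcont (fun x => g x j)) x0 eps :
  eps > 0 -> exists r, r > 0 /\ forall xi, vnorm (vsub xi x0) < r -> forall j, Rabs (g xi j - g x0 j) <= eps.
Proof.
  intros He.
  destruct (fin_min (fun j r => forall xi, vnorm (vsub xi x0) < r -> Rabs (g xi j - g x0 j) <= eps))
    as [r [Hr HP]].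
  - intros j d d' H [H1 H2] xi Hxi. apply H; lra.
  - intros j. destruct (Hc j x0 eps He) as [d [Hd HP]]. exists d; split; auto.
    intros; left; apply HP; auto.
  - exists r; split; auto.
Qed.

Lemma mvt_near (f : Vec n -> R) g (Hp : forall x j, has_partial f x j (g x j))
  (Hc : forall j, vcont (fun x => g x j)) x0 eps :
  eps > 0 -> exists r, r > 0 /\ forall x y, vnorm (vsub x x0) < r -> vnorm (vsub y x0) < r ->
    Rabs (f y - f x - vdot (g x0) (vsub y x)) <= eps * vnorm (vsub y x).
Proof.
  intros He. destruct (grad_near g Hc x0 eps He) as [r [Hr HP]].
  exists (r/2); split; [lra|]. intros x y Hx Hy.
  apply (mvt_vec f g Hp x0); auto. intros xi Hxi j. apply HP. lra.
Qed.

Lemma lipschitz (H : Vec n -> Vec n) (D : Vec n -> Idx n -> Idx n -> R)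
  (Hp : forall x i j, has_partial (fun y => H y i) x j (D x i j))
  (Hc : forall i j, vcont (fun x => D x i j)) x0 :
  exists r L, r > 0 /\ 0 <= L /\ forall x y, vnorm (vsub x x0) < r -> vnorm (vsub y x0) < r ->
    vnorm (vsub (H y) (H x)) <= L * vnorm (vsub y x).
Proof.
  destruct (fin_min (fun i r => forall x y, vnorm (vsub x x0) < r -> vnorm (vsub y x0) < r ->
     Rabs (H y i - H x i) <= (vnorm (D x0 i) + 1) * vnorm (vsub y x))) as [r [Hr HP]].
  - intros i d d' Hd [H1 H2] x y Hx Hy. apply Hd; lra.
  - intros i. destruct (mvt_near (fun y => H y i) (fun x => D x i) (fun x j => Hp x i j) (Hc i) x0 1) as [r [Hr HP]];
      [lra|]. exists r; split; auto. intros x y Hx Hy. specialize (HP x y Hx Hy).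
    pose proof (vdot_bound (D x0 i) (vsub y x)).
    pose proof (Rabs_triang_inv (H y i - H x i) (vdot (D x0 i) (vsub y x))).
    replace (H y i - H x i - vdot (D x0 i) (vsub y x)) with
      (H y i - H x i - vdot (D x0 i) (vsub y x)) in H1 by ring.
    pose proof (Rle_abs (vdot (D x0 i) (vsub y x))). lra.
  - exists r, (vsum (fun i => vnorm (D x0 i) + 1)). split; auto. split.
    + apply vsum_nonneg; intros; pose proof (vnorm_nonneg (D x0 i)); lra.
    + intros x y Hx Hy. rewrite Rmult_comm, <- vsum_scal. apply vsum_le; intros i.
      unfold vsub at 1. rewrite Rmult_comm. apply HP; auto.
Qed.

Lemma chain (Phi : Vec n -> R) g (Hp : forall x j, has_partial Phi x j (g x j))
  (Hc : forall j, vcont (fun x => g x j)) (zf : R -> Vec n) t (v : Vec n) :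
  (forall i, derivable_pt_lim (fun u => zf u i) t (v i)) ->
  derivable_pt_lim (fun u => Phi (zf u)) t (vdot (g (zf t)) v).
Proof.
  intros Hz eps He.
  set (c := g (zf t)). set (x0 := zf t).
  set (A := vnorm c). set (B := vnorm v). set (N := INR n).
  assert (HA : 0 <= A) by apply vnorm_nonneg.
  assert (HB : 0 <= B) by apply vnorm_nonneg.
  assert (HN : 0 <= N) by apply pos_INR.
  set (e2 := Rmin 1 (eps / (2 * (A + 1) * (N + 1)))).
  assert (He2 : 0 < e2) by (apply Rmin_glb_lt; [lra| apply Rdiv_lt_0_compat; nra]).
  assert (He2a : e2 <= 1) by apply Rmin_l.
  assert (He2b : e2 * (2 * (A + 1) * (N + 1)) <= eps).
  { assert (e2 <= eps / (2 * (A + 1) * (N + 1))) by apply Rmin_r.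
    apply (Rmult_le_compat_r (2 * (A + 1) * (N + 1))) in H; [|nra].
    assert (Hq: eps / (2*(A+1)*(N+1)) * (2*(A+1)*(N+1)) = eps) by (field; repeat split; lra). lra. }
  set (e1 := eps / (2 * (N + B + 1))).
  assert (He1 : 0 < e1) by (apply Rdiv_lt_0_compat; nra).
  assert (He1b : e1 * (2 * (N + B + 1)) = eps) by (unfold e1; field; lra).
  destruct (mvt_near Phi g Hp Hc x0 e1 He1) as [r [Hr Hmv]].
  destruct (fin_min (fun i d => forall k, k <> 0 -> Rabs k < d ->
      Rabs ((zf (t + k) i - zf t i) / k - v i) < e2)) as [d1 [Hd1 HP]].
  - intros i d d' H [H1 H2] k Hk Hkd. apply H; auto; lra.
  - intros i. destruct (Hz i e2 He2) as [d Hd]. exists (pos d); split; [apply cond_pos|].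
    intros; apply Hd; auto.
  - assert (HNB : 0 < N + B + 1) by lra.
    exists (mkposreal (Rmin d1 (r / (N + B + 1))) ltac:(apply Rmin_glb_lt; [lra| apply Rdiv_lt_0_compat; lra])).
    intros k Hk Hkd. simpl in Hkd.
    assert (Hk1 : Rabs k < d1) by (eapply Rlt_le_trans; [exact Hkd| apply Rmin_l]).
    assert (Hk2 : Rabs k < r / (N + B + 1)) by (eapply Rlt_le_trans; [exact Hkd| apply Rmin_r]).
    assert (Hkp : 0 < Rabs k) by (apply Rabs_pos_lt; auto).
    set (D := vsub (zf (t + k)) x0).
    assert (Hco : forall i, Rabs (D i - k * v i) <= e2 * Rabs k).
    { intros i. specialize (HP i k Hk Hk1).
      replace (D i - k * v i) with (((zf (t + k) i - zf t i) / k - v i) * k) by (unfold D, vsub, x0; field; auto).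
      rewrite Rabs_mult. apply Rmult_le_compat_r; [apply Rabs_pos| lra]. }
    assert (HDkv : vnorm (fun i => D i - k * v i) <= N * (e2 * Rabs k)).
    { apply vsum_const_le; auto. }
    assert (HvD : vnorm D <= Rabs k * (N + B)).
    { assert (vnorm D <= vnorm (fun i => D i - k * v i) + Rabs k * B).
      { unfold B, vnorm. rewrite <- vsum_scal, <- vsum_plus. apply vsum_le; intros i.
        rewrite <- Rabs_mult. replace (D i) with ((D i - k * v i) + k * v i) at 1 by ring. apply Rabs_triang. }
      assert (N * (e2 * Rabs k) <= N * Rabs k) by (apply Rmult_le_compat_l; [lra| nra]). lra. }
    assert (HDr : vnorm D < r).
    { apply Rlt_le_trans with (Rabs k * (N + B + 1)); [|].
      - apply Rle_lt_trans with (Rabs k * (N + B)); [auto| nra].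
      - apply (Rmult_lt_compat_r (N + B + 1)) in Hk2; auto.
        assert (Hq: r / (N + B + 1) * (N + B + 1) = r) by (field; lra). lra. }
    specialize (Hmv x0 (zf (t + k))). rewrite vnorm_self in Hmv. specialize (Hmv Hr HDr).
    fold D c in Hmv.
    assert (Hlin : vdot c D - k * vdot c v = vdot c (fun i => D i - k * v i)).
    { unfold vdot. rewrite <- vsum_scal. 
      assert (E : forall a b : R, a - b = a + (-1) * b) by (intros; ring).
      rewrite E, <- vsum_scal, <- vsum_plus. apply vsum_ext; intros; ring. }
    pose proof (vdot_bound c (fun i => D i - k * v i)) as Hb. fold A in Hb. rewrite <- Hlin in Hb.
    assert (Htot : Rabs (Phi (zf (t + k)) - Phi (zf t) - k * vdot c v) < eps * Rabs k).
    { replace (Phi (zf (t + k)) - Phi (zf t) - k * vdot c v) with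
        ((Phi (zf (t + k)) - Phi x0 - vdot c D) + (vdot c D - k * vdot c v)) by (unfold x0; ring).
      eapply Rle_lt_trans; [apply Rabs_triang|].
      assert (e1 * vnorm D <= e1 * (Rabs k * (N + B))) by (apply Rmult_le_compat_l; lra).
      assert (A * vnorm (fun i => D i - k * v i) <= A * (N * (e2 * Rabs k))) by (apply Rmult_le_compat_l; lra).
      assert (e1 * (Rabs k * (N + B)) < eps / 2 * Rabs k).
      { replace (eps / 2) with (e1 * (N + B + 1)) by (rewrite <- He1b; field).
        nra. }
      assert (A * (N * (e2 * Rabs k)) <= eps / 2 * Rabs k).
      { assert (A * N * e2 <= eps / 2).
        { assert (A * N <= (A + 1) * (N + 1)) by nra.
          assert (A * N * e2 <= (A + 1) * (N + 1) * e2) by nra. nra. }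
        nra. }
      change (g x0) with c in Hmv. lra. }
    fold x0 in Htot.
    replace ((Phi (zf (t + k)) - Phi x0) / k - vdot c v) with
      ((Phi (zf (t + k)) - Phi x0 - k * vdot c v) / k) by (field; auto).
    unfold Rdiv; rewrite Rabs_mult, Rabs_inv.
    apply (Rmult_lt_reg_r (Rabs k)); auto. rewrite Rmult_assoc, Rinv_l by lra. lra.
Qed.

End M3.

Section ODE.
Context {n s : nat} (h : Vec n -> Vec s -> Vec n) (p : Vec s) (z0 : Vec n) (T : R).

Lemma sol_deriv_int mu z : is_sol_on h p z0 T mu z -> forall t, 0 < t < T ->
  forall i, derivable_pt_lim (fun u => z u i) t (mu t * h (z t) p i).
Proof.
  intros [_ Hs] t Ht i eps He. destruct (Hs t ltac:(lra) i eps He) as [d [Hd P]].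
  assert (Hp : 0 < Rmin d (Rmin t (T - t))) by (repeat apply Rmin_glb_lt; lra).
  exists (mkposreal _ Hp). intros k Hk Hkd; simpl in Hkd.
  assert (Rabs k < d) by (eapply Rlt_le_trans; [exact Hkd| apply Rmin_l]).
  assert (Rabs k < Rmin t (T - t)) by (eapply Rlt_le_trans; [exact Hkd| apply Rmin_r]).
  assert (Rabs k < t) by (eapply Rlt_le_trans; [exact H0| apply Rmin_l]).
  assert (Rabs k < T - t) by (eapply Rlt_le_trans; [exact H0| apply Rmin_r]).
  apply Rabs_def2 in H1. apply Rabs_def2 in H2.
  specialize (P (t + k)). replace (t + k - t) with k in P by ring.
  apply P; [lra| intro Hc; apply Hk; lra| auto].
Qed.

Lemma sol_cont mu z : is_sol_on h p z0 T mu z -> forall t, 0 <= t <= T -> forall eps, eps > 0 ->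
  exists d, d > 0 /\ forall u, 0 <= u <= T -> Rabs (u - t) < d -> vnorm (vsub (z u) (z t)) < eps.
Proof.
  intros [_ Hs] t Ht eps He.
  set (N := INR n). assert (HN : 0 <= N) by apply pos_INR.
  set (e := eps / (N + 1)). assert (Hee : 0 < e) by (apply Rdiv_lt_0_compat; lra).
  destruct (fin_min (fun i d => forall u, 0 <= u <= T -> Rabs (u - t) < d -> Rabs (z u i - z t i) <= e))
    as [d [Hd HP]].
  - intros i d d' H [H1 H2] u Hu Hud; apply H; auto; lra.
  - intros i. set (a := mu t * h (z t) p i).
    destruct (Hs t Ht i 1 ltac:(lra)) as [d0 [Hd0 P]].
    assert (Ha : 0 < Rabs a + 1) by (pose proof (Rabs_pos a); lra).
    exists (Rmin d0 (e / (Rabs a + 1))); split; [apply Rmin_glb_lt; [lra| apply Rdiv_lt_0_compat; lra]|].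
    intros u Hu Hud.
    destruct (Req_dec u t) as [->|Hne]. { rewrite Rminus_diag, Rabs_R0; lra. }
    assert (Rabs (u - t) < d0) by (eapply Rlt_le_trans; [exact Hud| apply Rmin_l]).
    assert (Rabs (u - t) < e / (Rabs a + 1)) by (eapply Rlt_le_trans; [exact Hud| apply Rmin_r]).
    specialize (P u Hu Hne H). fold a in P.
    assert (Hut : u - t <> 0) by lra.
    replace (z u i - z t i) with ((z u i - z t i) / (u - t) * (u - t)) by (field; auto).
    rewrite Rabs_mult.
    assert (Rabs ((z u i - z t i) / (u - t)) <= Rabs a + 1).
    { pose proof (Rabs_triang_inv ((z u i - z t i) / (u - t)) a). lra. }
    apply Rle_trans with ((Rabs a + 1) * (e / (Rabs a + 1))).
    + apply Rmult_le_compat; try apply Rabs_pos; lra.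
    + right; field; lra.
  - exists d; split; auto. intros u Hu Hud.
    apply Rle_lt_trans with (N * e).
    + apply vsum_const_le; intros; apply HP; auto.
    + unfold e. apply Rlt_le_trans with ((N + 1) * (eps / (N + 1))).
      * apply Rmult_lt_compat_r; [apply Rdiv_lt_0_compat|]; lra.
      * right; field; lra.
Qed.



Lemma sumn_deriv (F : R -> nat -> R) (F' : nat -> R) c K :
  (forall k, derivable_pt_lim (fun u => F u k) c (F' k)) ->
  derivable_pt_lim (fun u => sumn (F u) K) c (sumn F' K).
Proof.
  intros H. induction K; simpl.
  - apply derivable_pt_lim_const.
  - apply (derivable_pt_lim_plus (fun u => sumn (F u) K) (fun u => F u K)); auto.
Qed.

Lemma vsum_deriv (F : R -> Vec n) (F' : Vec n) c :
  (forall i, derivable_pt_lim (fun u => F u i) c (F' i)) ->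
  derivable_pt_lim (fun u => vsum (F u)) c (vsum F').
Proof.
  intros H. unfold vsum. apply (sumn_deriv (fun u => vget (F u))). intros k.
  unfold vget. destruct (lt_dec k n); auto. apply derivable_pt_lim_const.
Qed.

Hypothesis Hlip : forall x0, exists r L, r > 0 /\ 0 <= L /\ forall x y,
  vnorm (vsub x x0) < r -> vnorm (vsub y x0) < r ->
  vnorm (vsub (h y p) (h x p)) <= L * vnorm (vsub y x).

Lemma local_step mu z w :
  (forall t, 0 <= t <= T -> forall eps, eps > 0 -> exists d, d > 0 /\
     forall u, 0 <= u <= T -> Rabs (u - t) < d -> Rabs (mu u - mu t) < eps) ->
  is_sol_on h p z0 T mu z -> is_sol_on h p z0 T mu w ->
  forall t0, 0 <= t0 < T -> z t0 = w t0 ->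
  exists eta, eta > 0 /\ t0 + eta < T /\ forall t, t0 <= t <= t0 + eta -> z t = w t.
Proof.
  intros Hmu Hz Hw t0 Ht0 Heq.
  set (x0 := z t0).
  destruct (Hlip x0) as [r [L [Hr [HL Hlp]]]].
  destruct (Hmu t0 ltac:(lra) 1 ltac:(lra)) as [d1 [Hd1 Hm]].
  set (B := Rabs (mu t0) + 1).
  assert (HB : 0 <= B) by (pose proof (Rabs_pos (mu t0)); unfold B; lra).
  destruct (sol_cont mu z Hz t0 ltac:(lra) r Hr) as [dz [Hdz Hcz]].
  destruct (sol_cont mu w Hw t0 ltac:(lra) r Hr) as [dw [Hdw Hcw]].
  set (eta := Rmin (Rmin d1 dz) (Rmin dw (T - t0)) / 2).
  assert (Heta : 0 < eta) by (assert (0 < Rmin (Rmin d1 dz) (Rmin dw (T - t0))) by (repeat apply Rmin_glb_lt; lra); unfold eta; lra).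
  assert (He1 : eta < d1) by (unfold eta; pose proof (Rmin_l (Rmin d1 dz) (Rmin dw (T - t0)));
     pose proof (Rmin_l d1 dz); lra).
  assert (He2 : eta < dz) by (unfold eta; pose proof (Rmin_l (Rmin d1 dz) (Rmin dw (T - t0)));
     pose proof (Rmin_r d1 dz); lra).
  assert (He3 : eta < dw) by (unfold eta; pose proof (Rmin_r (Rmin d1 dz) (Rmin dw (T - t0)));
     pose proof (Rmin_l dw (T - t0)); lra).
  assert (He4 : eta < T - t0) by (unfold eta; pose proof (Rmin_r (Rmin d1 dz) (Rmin dw (T - t0)));
     pose proof (Rmin_r dw (T - t0)); lra).
  set (N := INR n). assert (HN : 0 <= N) by apply pos_INR.
  set (K := 2 * B * L * N). assert (HK : 0 <= K) by (unfold K; repeat apply Rmult_le_pos; lra).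
  set (V := fun u => vsum (fun i => (z u i - w u i) * (z u i - w u i))).
  set (G := fun u => exp (- K * u) * V u).
  assert (HV0 : forall u, 0 <= V u) by (intros; apply vsum_nonneg; intros; apply Rle_0_sqr).
  set (Vd := fun c => vsum (fun i => (mu c * h (z c) p i - mu c * h (w c) p i) * (z c i - w c i)
                     + (z c i - w c i) * (mu c * h (z c) p i - mu c * h (w c) p i))).
  set (Gd := fun c => exp (- K * c) * (- K) * V c + exp (- K * c) * Vd c).
  assert (HGd : forall c, t0 < c <= t0 + eta -> derivable_pt_lim G c (Gd c) /\ Gd c <= 0).
  { intros c Hc. assert (Hci : 0 < c < T) by lra.
    assert (HdV : derivable_pt_lim V c (Vd c)).
    { apply vsum_deriv. intros i.
      pose proof (sol_deriv_int mu z Hz c Hci i) as Dz.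
      pose proof (sol_deriv_int mu w Hw c Hci i) as Dw.
      pose proof (derivable_pt_lim_minus _ _ _ _ _ Dz Dw) as De.
      apply (derivable_pt_lim_mult (fun u => z u i - w u i) (fun u => z u i - w u i)); exact De. }
    split.
    - apply (derivable_pt_lim_mult (fun u => exp (- K * u)) V); auto.
      apply is_derive_Reals. auto_derive; auto. ring.
    - assert (Hvd : Vd c <= K * V c).
      { set (e := vsub (z c) (w c)).
        assert (Hmc : Rabs (mu c) <= B).
        { assert (Rabs (mu c - mu t0) < 1) by (apply Hm; [lra| rewrite Rabs_right; lra]).
          pose proof (Rabs_triang_inv (mu c) (mu t0)). unfold B; lra. }
        assert (S1 : Vd c <= vsum (fun i => 2 * B * (vnorm e * Rabs (h (z c) p i - h (w c) p i)))).
        { apply vsum_le. intros i.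
          pose proof (vabs_le_vnorm e i) as Hei. change (e i) with (z c i - w c i) in Hei.
          replace ((mu c * h (z c) p i - mu c * h (w c) p i) * (z c i - w c i) +
             (z c i - w c i) * (mu c * h (z c) p i - mu c * h (w c) p i)) with
             (2 * (mu c * ((z c i - w c i) * (h (z c) p i - h (w c) p i)))) by ring.
          assert (mu c * ((z c i - w c i) * (h (z c) p i - h (w c) p i)) <=
                  B * (vnorm e * Rabs (h (z c) p i - h (w c) p i))).
          { eapply Rle_trans; [apply Rle_abs|]. rewrite Rabs_mult, Rabs_mult.
            apply Rmult_le_compat; auto; try apply Rabs_pos.
            - apply Rmult_le_pos; apply Rabs_pos.
            - apply Rmult_le_compat_r; auto; apply Rabs_pos. }
          lra. }
        rewrite vsum_scal, vsum_scal in S1.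
        change (vsum (fun i => Rabs (h (z c) p i - h (w c) p i))) with (vnorm (vsub (h (z c) p) (h (w c) p))) in S1.
        assert (Hl : vnorm (vsub (h (z c) p) (h (w c) p)) <= L * vnorm e).
        { apply Hlp.
          - fold x0 in Heq. rewrite Heq. unfold x0 in Heq. apply Hcw; [lra| rewrite Rabs_right; lra].
          - apply Hcz; [lra| rewrite Rabs_right; lra]. }
        assert (Hcs := vnorm_cs e).
        assert (Hne := vnorm_nonneg e).
        change (vsum (fun i => e i * e i)) with (V c) in Hcs.
        assert (2 * B * (vnorm e * vnorm (vsub (h (z c) p) (h (w c) p))) <= 2 * B * (L * (vnorm e)^2)).
        { apply Rmult_le_compat_l; [lra|]. simpl. rewrite Rmult_1_r.
          replace (L * (vnorm e * vnorm e)) with (vnorm e * (L * vnorm e)) by ring.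
          apply Rmult_le_compat_l; auto. }
        assert (2 * B * (L * (vnorm e)^2) <= 2 * B * (L * (N * V c))).
        { apply Rmult_le_compat_l; [lra|]. apply Rmult_le_compat_l; auto. }
        unfold K. lra. }
      unfold Gd. pose proof (exp_pos (- K * c)).
      replace (exp (- K * c) * - K * V c + exp (- K * c) * Vd c) with (exp (- K * c) * (Vd c - K * V c)) by ring.
      assert (Vd c - K * V c <= 0) by lra.
      apply Rmult_le_0_l; lra. }
  exists eta; split; auto; split; [lra|].
  intros t Ht. destruct (Req_dec t t0) as [->|Htne]; auto.
  assert (Htt : t0 < t) by lra.
  assert (HGt : G t <= 0).
  { destruct (Rle_lt_dec (G t) 0) as [|Hpos]; auto. exfalso.
    set (sm := Rmin 1 (G t / 8)).
    assert (Hsm : 0 < sm) by (apply Rmin_glb_lt; lra).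
    assert (Hsm1 : sm <= 1) by apply Rmin_l. assert (Hsm2 : sm <= G t / 8) by apply Rmin_r.
    destruct (sol_cont mu z Hz t0 ltac:(lra) sm Hsm) as [dz' [Hdz' Hcz']].
    destruct (sol_cont mu w Hw t0 ltac:(lra) sm Hsm) as [dw' [Hdw' Hcw']].
    set (a := t0 + Rmin (Rmin dz' dw') (t - t0) / 2).
    assert (Ha0 : 0 < Rmin (Rmin dz' dw') (t - t0)) by (repeat apply Rmin_glb_lt; lra).
    assert (Ha1 : Rmin (Rmin dz' dw') (t - t0) <= t - t0) by apply Rmin_r.
    assert (Ha2 : Rmin (Rmin dz' dw') (t - t0) <= dz') by (eapply Rle_trans; apply Rmin_l).
    assert (Ha3 : Rmin (Rmin dz' dw') (t - t0) <= dw') by (eapply Rle_trans; [apply Rmin_l| apply Rmin_r]).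
    assert (Hat : t0 < a < t) by (unfold a; lra).
    assert (HGa : G a < G t).
    { set (e := vsub (z a) (w a)).
      assert (Hea : vnorm e < 2 * sm).
      { pose proof (vnorm_tri (z a) x0 (w a)). fold e in H.
        rewrite (vnorm_sym x0 (w a)) in H. unfold x0 in H. rewrite Heq in H.
        assert (vnorm (vsub (z a) (z t0)) < sm) by (apply Hcz'; [lra| rewrite Rabs_right; unfold a; lra]).
        assert (vnorm (vsub (w a) (w t0)) < sm) by (apply Hcw'; [lra| rewrite Rabs_right; unfold a; lra]).
        rewrite <- Heq in H at 1. lra. }
      assert (HVa : V a <= vnorm e * vnorm e).
      { unfold V. apply Rle_trans with (vsum (fun i => vnorm e * Rabs (e i))).
        - apply vsum_le; intros i. change (z a i - w a i) with (e i).
          rewrite <- (Rabs_pos_eq (e i * e i)) by apply Rle_0_sqr. rewrite Rabs_mult.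
          apply Rmult_le_compat_r; [apply Rabs_pos| apply (vabs_le_vnorm e i)].
        - rewrite vsum_scal. right; reflexivity. }
      assert (Hexp : exp (- K * a) <= 1).
      { destruct (Rle_lt_dec (exp (- K * a)) 1) as [|Hc]; auto. rewrite <- exp_0 in Hc.
        apply exp_lt_inv in Hc. nra. }
      pose proof (vnorm_nonneg e).
      assert (G a <= V a) by (unfold G; pose proof (HV0 a); pose proof (exp_pos (- K * a)); nra).
      assert (vnorm e * vnorm e < 4 * sm * sm) by nra.
      nra. }
    destruct (MVT_cor2 G Gd a t ltac:(lra)) as [c0 [HMV Hc0]].
    { intros c Hc. apply HGd; lra. }
    assert (Gd c0 <= 0) by (apply HGd; lra). nra. }
  assert (HVt : V t <= 0).
  { unfold G in HGt. pose proof (exp_pos (- K * t)). nra. }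
  apply functional_extensionality; intros i.
  assert ((z t i - w t i) * (z t i - w t i) <= V t).
  { apply (vsum_ge_term (fun i => (z t i - w t i) * (z t i - w t i))). intros; apply Rle_0_sqr. }
  nra.
Qed.

Lemma ode_unique mu z w :
  (forall t, 0 <= t <= T -> forall eps, eps > 0 -> exists d, d > 0 /\
     forall u, 0 <= u <= T -> Rabs (u - t) < d -> Rabs (mu u - mu t) < eps) ->
  0 <= T ->
  is_sol_on h p z0 T mu z -> is_sol_on h p z0 T mu w ->
  forall t, 0 <= t <= T -> z t = w t.
Proof.
  intros Hmu HT Hz Hw.
  set (E := fun t => 0 <= t <= T /\ forall u, 0 <= u <= t -> z u = w u).
  assert (HE0 : E 0).
  { split; [lra|]. intros u Hu. replace u with 0 by lra. destruct Hz as [-> _], Hw as [-> _]; auto. }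
  assert (Hb : bound E) by (exists T; intros t [Ht _]; lra).
  destruct (completeness E Hb (ex_intro _ 0 HE0)) as [t0 [Hub Hlub]].
  assert (Ht0 : 0 <= t0 <= T).
  { split; [apply Hub; auto| apply Hlub; intros t [Ht _]; lra]. }
  assert (Hbelow : forall u, 0 <= u < t0 -> z u = w u).
  { intros u Hu. destruct (classic (exists t, E t /\ u < t)) as [[t [[_ Ht] Hut]]|Hno].
    - apply Ht; lra.
    - exfalso. assert (t0 <= u); [|lra]. apply Hlub. intros t Et.
      destruct (Rle_lt_dec t u); auto. exfalso; apply Hno; eauto. }
  assert (Hat : z t0 = w t0).
  { destruct (Req_dec t0 0) as [->|Hne].
    - destruct Hz as [-> _], Hw as [-> _]; auto.
    - apply vnorm_zero_eq. destruct (Rle_lt_dec (vnorm (vsub (z t0) (w t0))) 0) as [|Hpos]; auto.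
      exfalso. set (a := vnorm (vsub (z t0) (w t0))) in *.
      assert (Ha2 : a / 2 > 0) by lra.
      assert (Ht0' : 0 <= t0 <= T) by lra.
      destruct (sol_cont mu z Hz t0 Ht0' (a/2) Ha2) as [dz [Hdz Hcz]].
      destruct (sol_cont mu w Hw t0 Ht0' (a/2) Ha2) as [dw [Hdw Hcw]].
      set (u := t0 - Rmin (Rmin dz dw) t0 / 2).
      assert (H0 : 0 < Rmin (Rmin dz dw) t0) by (repeat apply Rmin_glb_lt; lra).
      assert (H1 : Rmin (Rmin dz dw) t0 <= t0) by apply Rmin_r.
      assert (H2 : Rmin (Rmin dz dw) t0 <= dz) by (eapply Rle_trans; apply Rmin_l).
      assert (H3 : Rmin (Rmin dz dw) t0 <= dw) by (eapply Rle_trans; [apply Rmin_l| apply Rmin_r]).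
      assert (Hu : 0 <= u < t0) by (unfold u; lra).
      assert (Hzu : vnorm (vsub (z u) (z t0)) < a / 2) by (apply Hcz; [lra| rewrite Rabs_left; unfold u; lra]).
      assert (Hwu : vnorm (vsub (w u) (w t0)) < a / 2) by (apply Hcw; [lra| rewrite Rabs_left; unfold u; lra]).
      pose proof (vnorm_tri (z t0) (z u) (w t0)). rewrite (vnorm_sym (z t0) (z u)) in H.
      assert (vnorm (vsub (z u) (w t0)) = vnorm (vsub (w u) (w t0))) by (rewrite (Hbelow u Hu); auto).
      fold a in H. lra. }
  assert (HEt0 : E t0).
  { split; auto. intros u Hu. destruct (Req_dec u t0) as [->|]; auto. apply Hbelow; lra. }
  destruct (Req_dec t0 T) as [->|HtT].
  - intros t Ht. apply HEt0; lra.
  - exfalso. destruct (local_step mu z w Hmu Hz Hw t0 ltac:(lra) Hat) as [eta [Heta [HeT Hloc]]].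
    assert (E (t0 + eta)).
    { split; [lra|]. intros u Hu. destruct (Rle_lt_dec u t0).
      - apply HEt0; lra.
      - apply Hloc; lra. }
    pose proof (Hub _ H). lra.
Qed.

End ODE.

Definition clamp (T u : R) := Rmax 0 (Rmin T u).

Lemma clamp_in T u : 0 <= T -> 0 <= clamp T u <= T.
Proof. intros; unfold clamp, Rmax, Rmin; repeat destruct Rle_dec; lra. Qed.
Lemma clamp_id T u : 0 <= u <= T -> clamp T u = u.
Proof. intros; unfold clamp, Rmax, Rmin; repeat destruct Rle_dec; lra. Qed.
Lemma clamp_lip T u v : 0 <= T -> Rabs (clamp T u - clamp T v) <= Rabs (u - v).
Proof. intros; unfold clamp, Rmax, Rmin; repeat destruct Rle_dec; unfold Rabs; repeat destruct Rcase_abs; lra. Qed.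

Definition mu_cont (T : R) (mu : R -> R) : Prop :=
  forall t, 0 <= t <= T -> forall eps, eps > 0 -> exists d, d > 0 /\
     forall u, 0 <= u <= T -> Rabs (u - t) < d -> Rabs (mu u - mu t) < eps.

Lemma mt_cont T mu : 0 <= T -> mu_cont T mu -> forall x, continuity_pt (fun u => mu (clamp T u)) x.
Proof.
  intros HT Hm x. unfold continuity_pt, continue_in, limit1_in, limit_in. simpl. unfold Rdist.
  intros eps He. destruct (Hm (clamp T x) (clamp_in T x HT) eps He) as [d [Hd P]].
  exists d; split; auto. intros u [_ Hu]. apply P. apply clamp_in; auto.
  eapply Rle_lt_trans; [apply clamp_lip; auto| exact Hu].
Qed.

Lemma mt_contc T mu : 0 <= T -> mu_cont T mu -> forall x, continuous (fun u => mu (clamp T u)) x.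
Proof. intros; apply continuity_pt_filterlim; apply mt_cont; auto. Qed.

Lemma mt_exRInt T mu : 0 <= T -> mu_cont T mu -> forall a b, ex_RInt (fun u => mu (clamp T u)) a b.
Proof. intros; apply (ex_RInt_continuous (V := R_CompleteNormedModule)); intros; apply mt_contc; auto. Qed.

Lemma m_deriv T mu : 0 <= T -> mu_cont T mu -> forall t,
  derivable_pt_lim (fun t => RInt (fun u => mu (clamp T u)) 0 t) t (mu (clamp T t)).
Proof.
  intros HT Hm t. apply is_derive_Reals.
  apply (is_derive_RInt (fun u => mu (clamp T u)) _ 0 t).
  - apply filter_forall; intros; apply (RInt_correct (V := R_CompleteNormedModule)), mt_exRInt; auto.
  - apply mt_contc; auto.
Qed.

Lemma reparam_sol {n s} (h : Vec n -> Vec s -> Vec n) p z0 zhat T mu :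
  0 <= T -> mu_cont T mu -> is_global_sol h p z0 zhat ->
  is_sol_on h p z0 T mu (fun t => zhat (RInt (fun u => mu (clamp T u)) 0 t)).
Proof.
  intros HT Hm [Hz0 Hzd]. split.
  - rewrite RInt_point. exact Hz0.
  - intros t Ht i eps He.
    pose proof (derivable_pt_lim_comp _ (fun x => zhat x i) t _ _ (m_deriv T mu HT Hm t)
        (Hzd (RInt (fun u => mu (clamp T u)) 0 t) i)) as D.
    rewrite (clamp_id T t Ht) in D.
    destruct (D eps He) as [d Hd]. exists (pos d); split; [apply cond_pos|].
    intros u Hu Hne Hud. specialize (Hd (u - t) ltac:(lra) Hud).
    unfold comp in Hd. replace (t + (u - t)) with u in Hd by ring.
    rewrite Rmult_comm. exact Hd.
Qed.

Lemma int_bounds T C1 mu ms M :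
  0 < T -> mu_cont T mu -> energy_eq T C1 mu -> 0 < ms -> ms * ms * T = C1 ->
  (forall t, 0 <= t <= T -> Rabs (mu t - ms) <= M) ->
  ms * RInt (fun u => mu (clamp T u)) 0 T <= C1 /\
  (ms - M) * T <= RInt (fun u => mu (clamp T u)) 0 T.
Proof.
  intros HT Hm [pr Hpr] Hms HC HM.
  set (mt := fun u => mu (clamp T u)).
  assert (Hext : forall x, Rmin 0 T < x < Rmax 0 T -> mu x = mt x).
  { intros x Hx. rewrite Rmin_left, Rmax_right in Hx by lra. unfold mt; rewrite clamp_id; auto; lra. }
  set (I := RInt mt 0 T).
  assert (H1 : is_RInt (fun t => mt t ^ 2) 0 T C1).
  { rewrite <- Hpr, <- RInt_Reals.
    apply (is_RInt_ext (fun t => mu t ^ 2)).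
    - intros x Hx; rewrite Hext; auto.
    - apply (RInt_correct (V := R_CompleteNormedModule)). apply ex_RInt_Reals_1; auto. }
  assert (H2 : is_RInt mt 0 T I).
  { apply (RInt_correct (V := R_CompleteNormedModule)). apply mt_exRInt; [lra| auto]. }
  pose proof (is_RInt_plus _ _ _ _ _ _ (is_RInt_minus _ _ _ _ _ _ H1 (is_RInt_scal _ _ _ (2 * ms) _ H2))
     (is_RInt_const 0 T (ms * ms))) as Hc.
  assert (Hc' : is_RInt (fun t => (mt t - ms) * (mt t - ms)) 0 T (C1 - 2 * ms * I + (T - 0) * (ms * ms))).
  { eapply is_RInt_ext; [|exact Hc]. intros x _.
    unfold plus, minus, scal, opp, mult; simpl.
    change (mt x * (mt x * 1) + - ((2 * ms) * (mt x)) + ms * ms = (mt x - ms) * (mt x - ms)). ring. }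
  split.
  - assert (0 <= C1 - 2 * ms * I + (T - 0) * (ms * ms)).
    { rewrite <- (is_RInt_unique _ _ _ _ Hc'). apply RInt_ge_0; [lra| eexists; exact Hc'|].
      intros; apply Rle_0_sqr. }
    lra.
  - assert (RInt (fun _ => ms - M) 0 T <= I).
    { apply RInt_le; [lra| apply ex_RInt_const| eexists; exact H2|].
      intros x Hx. rewrite <- Hext by (rewrite Rmin_left, Rmax_right; lra).
      specialize (HM x ltac:(lra)). pose proof (Rle_abs (-(mu x - ms))). rewrite Rabs_Ropp in H. lra. }
    rewrite RInt_const in H. change (scal (T - 0) (ms - M)) with ((T - 0) * (ms - M)) in H. lra.
Qed.

Lemma loc_ext (F : R -> R) a L : derivable_pt_lim F a L -> L > 0 ->
  exists eps, eps > 0 /\ forall t, a - eps < t <= a -> F t <= F a.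
Proof.
  intros D HL. destruct (D (L / 2) ltac:(lra)) as [d Hd].
  exists (pos d); split; [apply cond_pos|]. intros t Ht.
  destruct (Req_dec t a) as [->|Hne]; [lra|].
  specialize (Hd (t - a) ltac:(lra) ltac:(rewrite Rabs_left; lra)).
  replace (a + (t - a)) with t in Hd by ring.
  apply Rabs_def2 in Hd. destruct Hd as [_ Hd].
  set (q := (F t - F a) / (t - a)) in *.
  assert (F t - F a = q * (t - a)) by (unfold q; field; lra).
  nra.
Qed.

Theorem mainTheorem8
  (n s : nat) (Hn : (1 <= n)%nat) (Hs : (1 <= s)%nat)
  (p : Vec s) (z0 : Vec n)
  (h : Vec n -> Vec s -> Vec n) (Hh : C1_first_arg h)
  (zhat : R -> Vec n)
  (Hzhat : is_global_sol h p z0 zhat)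
  (Hzhat_uniq : forall w, is_global_sol h p z0 w -> forall t, w t = zhat t)
  (Phi : Vec n -> R) (gradPhi : Vec n -> Vec n) (HPhi : C1_with_grad Phi gradPhi)
  (T C1 : R) (HT : T > 0) (HC1 : C1 > 0) :
  let mustar := sqrt (C1 / T) in
  let taustar := sqrt (C1 * T) in
  let Phih := vdot (gradPhi (zhat taustar)) (h (zhat taustar) p) in
  (Phih > 0 ->
     exists delta, delta > 0 /\
       forall (mu : R -> R) (z zs : R -> Vec n),
         cont_pos_on T mu -> energy_eq T C1 mu -> sup_dist_lt T mu mustar delta ->
         is_sol_on h p z0 T mu z ->
         is_sol_on h p z0 T (fun _ => mustar) zs ->
         Phi (z T) <= Phi (zs T)) /\
  (Phih < 0 ->
     exists delta, delta > 0 /\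
       forall (mu : R -> R) (z zs : R -> Vec n),
         cont_pos_on T mu -> energy_eq T C1 mu -> sup_dist_lt T mu mustar delta ->
         is_sol_on h p z0 T mu z ->
         is_sol_on h p z0 T (fun _ => mustar) zs ->
         Phi (z T) >= Phi (zs T)).
Proof.
  intros ms ts Phih.
  destruct Hh as [Dh HDh]. destruct (HDh p) as [HDp HDc].
  pose proof (lipschitz (fun y => h y p) (fun x i j => Dh x p i j) HDp HDc) as Hlip.
  destruct HPhi as [HP1 HP2].
  assert (Hms : 0 < ms) by (apply sqrt_lt_R0; apply Rdiv_lt_0_compat; lra).
  assert (Hms2 : ms * ms = C1 / T) by (apply sqrt_sqrt; apply Rlt_le, Rdiv_lt_0_compat; lra).
  assert (HmsT : ms * ms * T = C1) by (rewrite Hms2; field; lra).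
  assert (Hts : ts = ms * T).
  { unfold ts. replace (C1 * T) with ((ms * T) * (ms * T)) by (rewrite <- HmsT; ring).
    apply sqrt_square. nra. }
  assert (Hsol : forall mu z, mu_cont T mu -> is_sol_on h p z0 T mu z ->
      z T = zhat (RInt (fun u => mu (clamp T u)) 0 T)).
  { intros mu z Hm Hz.
    apply (ode_unique h p z0 T Hlip mu z (fun t => zhat (RInt (fun u => mu (clamp T u)) 0 t)) Hm
      ltac:(lra) Hz (reparam_sol h p z0 zhat T mu ltac:(lra) Hm Hzhat) T). lra. }
  assert (Key : forall eps, eps > 0 -> exists delta, delta > 0 /\
     forall (mu : R -> R) (z zs : R -> Vec n),
         cont_pos_on T mu -> energy_eq T C1 mu -> sup_dist_lt T mu ms delta ->
         is_sol_on h p z0 T mu z ->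
         is_sol_on h p z0 T (fun _ => ms) zs ->
         zs T = zhat ts /\ exists I, z T = zhat I /\ ts - eps < I <= ts).
  { intros eps He. exists (eps / T); split; [apply Rdiv_lt_0_compat; lra|].
    intros mu z zs [Hpos Hm] Hen [M [HMd HM]] Hz Hzs. split.
    - rewrite (Hsol (fun _ => ms) zs).
      + rewrite RInt_const. change (scal (T - 0) ms) with ((T - 0) * ms). f_equal. rewrite Hts; ring.
      + intros t Ht e0 He0. exists 1; split; [lra|]. intros; rewrite Rminus_diag, Rabs_R0; lra.
      + auto.
    - exists (RInt (fun u => mu (clamp T u)) 0 T). split; [apply Hsol; auto|].
      destruct (int_bounds T C1 mu ms M ltac:(lra) Hm Hen Hms HmsT HM) as [B1 B2].
      split.
      + assert (M * T < eps).
        { apply (Rmult_lt_compat_r T) in HMd; [|lra].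
          replace (eps / T * T) with eps in HMd by (field; lra). lra. }
        rewrite Hts. nra.
      + rewrite Hts. apply (Rmult_le_reg_l ms); auto. lra. }
  assert (Hder : derivable_pt_lim (fun u => Phi (zhat u)) ts Phih).
  { apply (chain Phi gradPhi HP1 HP2 zhat ts (h (zhat ts) p)).
    intros i. destruct Hzhat as [_ Hd]. apply Hd. }
  split.
  - intros HPp. destruct (loc_ext _ _ _ Hder HPp) as [eps [He HP]].
    destruct (Key eps He) as [delta [Hd HK]]. exists delta; split; auto.
    intros mu z zs H1 H2 H3 H4 H5. destruct (HK mu z zs H1 H2 H3 H4 H5) as [E1 [I [E2 HI]]].
    rewrite E1, E2. apply HP; auto.
  - intros HPn.
    assert (Hder' : derivable_pt_lim (fun u => - Phi (zhat u)) ts (- Phih)).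
    { apply (derivable_pt_lim_opp (fun u => Phi (zhat u))); auto. }
    destruct (loc_ext _ _ _ Hder' ltac:(lra)) as [eps [He HP]].
    destruct (Key eps He) as [delta [Hd HK]]. exists delta; split; auto.
    intros mu z zs H1 H2 H3 H4 H5. destruct (HK mu z zs H1 H2 H3 H4 H5) as [E1 [I [E2 HI]]].
    rewrite E1, E2. specialize (HP I HI). simpl in HP. lra.
Qed.
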